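(* Let $l\subset\mathbb{R}$ be a compact set. (i) If $l$ is uniformly sparse, then $\overline{\dim}_{\mathrm B}\, l=0$. (ii) If $l$ is uniformly super sparse, then $\dim_{\mathrm A} l=0$. (iii) If $l$ is finite, then $l$ is uniformly super sparse. (iv) The converse of (i) fails: the set $l_0=\{0\}\cup\{2^{-k}:k\ge0\}$ satisfies $\overline{\dim}_{\mathrm B}\, l_0=0$ but is not sparse near $0$, hence not uniformly sparse.
   Context: For a compact set $l\subset\mathbb{R}$ let $W(l)=\{k\in\mathbb{N}: l\cap([2^{-k-1},2^{-k}]\cup[-2^{-k},-2^{-k-1}])\neq\emptyset\}$, and for $a\in l$ let $W(l,a)=W(l-a)$. $l$ is sparse near $a$ if $W(l,a)$ has upper natural density $\limsup_n \#(W(l,a)\cap[1,n])/n=0$. $l$ is uniformly sparse if for every $\delta>0$ there is $N_\delta$ with $\#(W(l,a)\cap[1,N])\le\delta N$ for all $a\in l$ and $N\ge N_\delta$; $l$ is uniformly super sparse if for every $\delta>0$ there is $N_\delta$ with $\#(W(l,a)\cap[k+1,k+N])\le\delta N$ for all $a\in l$, $k\in\mathbb{N}$ and $N\ge N_\delta$. $\overline{\dim}_{\mathrm B}$ is upper box dimension. The Assouad dimension $\dim_{\mathrm A}F$ is the infimum of $s\ge0$ such that there is $C>0$ with $N(B(x,R)\cap F,r)\le C(R/r)^s$ for all $0<r<R$ and $x\in F$, where $N(E,r)$ is the minimal number of intervals of length $r$ covering $E$. *)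

(* Defs.v *)
From Stdlib Require Import Reals Lra Lia List ClassicalEpsilon.
Open Scope R_scope.

Definition W (l : R -> Prop) (k : nat) : Prop :=
  exists x, l x /\
    ((/ 2 ^ (S k) <= x <= / 2 ^ k) \/ (- / 2 ^ k <= x <= - / 2 ^ (S k))).

Definition shift (l : R -> Prop) (a : R) : R -> Prop := fun y => l (y + a).
Definition Wa (l : R -> Prop) (a : R) : nat -> Prop := W (shift l a).

(* cnt P k N = #(P ∩ [k+1, k+N]) *)
Fixpoint cnt (P : nat -> Prop) (k N : nat) : nat :=
  match N with
  | O => O
  | S m => (cnt P k m + (if excluded_middle_informative (P (k + S m)%nat) then 1 else 0))%nat
  end.

(* l sparse near a: upper natural density of W(l,a) is 0
   (limsup of a nonnegative sequence is 0 iff eventually <= delta) *)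
Definition sparse_near (l : R -> Prop) (a : R) : Prop :=
  forall delta, delta > 0 -> exists N0 : nat, forall n : nat, (N0 <= n)%nat ->
    INR (cnt (Wa l a) 0 n) <= delta * INR n.

Definition uniformly_sparse (l : R -> Prop) : Prop :=
  forall delta, delta > 0 -> exists Nd : nat, forall a, l a -> forall N : nat, (Nd <= N)%nat ->
    INR (cnt (Wa l a) 0 N) <= delta * INR N.

Definition uniformly_super_sparse (l : R -> Prop) : Prop :=
  forall delta, delta > 0 -> exists Nd : nat, forall a, l a -> forall k N : nat, (Nd <= N)%nat ->
    INR (cnt (Wa l a) k N) <= delta * INR N.

Definition covered_by (E : R -> Prop) (r : R) (n : nat) : Prop :=
  exists cs : list R, length cs = n /\
    forall x, E x -> exists c, In c cs /\ c <= x <= c + r.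

Definition is_covnum (E : R -> Prop) (r : R) (n : nat) : Prop :=
  covered_by E r n /\ forall m, covered_by E r m -> (n <= m)%nat.

(* d = upper box dimension of E = limsup_{r -> 0+} log N(E,r) / (- log r) *)
Definition upper_box_dim_eq (E : R -> Prop) (d : R) : Prop :=
  (forall eps, eps > 0 -> exists r0, r0 > 0 /\
     forall r n, 0 < r < r0 -> is_covnum E r n -> ln (INR n) / (- ln r) <= d + eps) /\
  (forall eps, eps > 0 -> forall r0, r0 > 0 ->
     exists r n, 0 < r < r0 /\ is_covnum E r n /\ ln (INR n) / (- ln r) >= d - eps).

Definition assouad_ok (F : R -> Prop) (s : R) : Prop :=
  s >= 0 /\ exists C, C > 0 /\
    forall x r R0, F x -> 0 < r -> r < R0 ->
      forall n, is_covnum (fun y => Rabs (y - x) <= R0 /\ F y) r n ->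
        INR n <= C * Rpower (R0 / r) s.

Definition assouad_dim_eq (F : R -> Prop) (d : R) : Prop :=
  (forall s, assouad_ok F s -> d <= s) /\
  (forall eps, eps > 0 -> exists s, assouad_ok F s /\ s < d + eps).

Definition finite_set (l : R -> Prop) : Prop :=
  exists L : list R, forall x, l x <-> In x L.

Definition l0 : R -> Prop := fun x => x = 0 \/ exists k : nat, x = / 2 ^ k.

(* Main.v *)
Require Import Defs.
From Stdlib Require Import Reals Lra Lia List Classical ClassicalEpsilon.
Open Scope R_scope.

Lemma cnt_le_N P k N : (cnt P k N <= N)%nat.
Proof. induction N; simpl; [lia|]. destruct excluded_middle_informative; lia. Qed.

Lemma cnt_mono (P Q : nat -> Prop) k N : (forall j, P j -> Q j) -> (cnt P k N <= cnt Q k N)%nat.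
Proof. intros H; induction N; simpl; [lia|].
  destruct (excluded_middle_informative (P _)); destruct (excluded_middle_informative (Q _)); try lia.
  exfalso; auto. Qed.

Lemma cnt_split P a i p : cnt P a (i + p) = (cnt P a i + cnt P (a + i) p)%nat.
Proof. induction p; simpl.
  - rewrite Nat.add_0_r; lia.
  - rewrite Nat.add_succ_r; simpl. rewrite IHp.
    replace (a + S (i + p))%nat with (a + i + S p)%nat by lia. lia. Qed.

Lemma cnt_last P k m : P (k + S m)%nat -> (1 <= cnt P k (S m))%nat.
Proof. intros H; simpl. destruct excluded_middle_informative; [lia| contradiction]. Qed.

Lemma cnt_or (P Q : nat -> Prop) k N : (cnt (fun j => P j \/ Q j) k N <= cnt P k N + cnt Q k N)%nat.
Proof. induction N; simpl; [lia|].
  destruct (excluded_middle_informative (P _ \/ Q _)) as [[h|h]|h];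
  destruct (excluded_middle_informative (P _)); destruct (excluded_middle_informative (Q _)); try lia;
  exfalso; tauto. Qed.

Lemma cnt_zero (P : nat -> Prop) k N : (forall j, (1 <= j <= N)%nat -> ~ P (k + j)%nat) -> cnt P k N = 0%nat.
Proof. induction N; intros H; simpl; auto.
  rewrite IHN by (intros j hj; apply H; lia).
  destruct excluded_middle_informative as [h|h]; auto. exfalso; apply (H (S N)); auto; lia. Qed.

Lemma cnt_single h k N : (cnt (fun j => j = h) k N <= 1)%nat.
Proof. induction N; simpl; [lia|].
  destruct excluded_middle_informative as [e|e]; [|lia].
  rewrite cnt_zero; [lia|]. intros j hj c; lia. Qed.

Lemma cnt_list (js : list nat) k N : (cnt (fun j => In j js) k N <= length js)%nat.
Proof. induction js as [|h t IH]; simpl.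
  - rewrite cnt_zero; [lia|]. intros j _ c; exact c.
  - pose proof (cnt_or (fun j => h = j) (fun j => In j t) k N).
    pose proof (cnt_mono (fun j => h = j) (fun j => j = h) k N (fun j e => eq_sym e)).
    pose proof (cnt_single h k N). lia. Qed.
Lemma Rabs_le_inv x a : Rabs x <= a -> - a <= x <= a.
Proof. unfold Rabs; destruct Rcase_abs; intros; lra. Qed.
Lemma cov_union (A B C : R -> Prop) r m1 m2 : covered_by A r m1 -> covered_by B r m2 ->
  (forall z, C z -> A z \/ B z) -> covered_by C r (m1 + m2).
Proof. intros [c1 [L1 H1]] [c2 [L2 H2]] H. exists (c1 ++ c2); split.
  - rewrite length_app; lia.
  - intros x hx. destruct (H x hx) as [h|h].
    + destruct (H1 x h) as [c [hc hc']]; exists c; split; auto; apply in_or_app; auto.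
    + destruct (H2 x h) as [c [hc hc']]; exists c; split; auto; apply in_or_app; auto. Qed.

Lemma cov_empty (A : R -> Prop) r : (forall z, ~ A z) -> covered_by A r 0.
Proof. intros H; exists nil; split; auto. intros x hx; exfalso; eapply H; eauto. Qed.

Lemma cov_mono (A B : R -> Prop) r r' m : covered_by A r m -> r <= r' -> (forall z, B z -> A z) -> covered_by B r' m.
Proof. intros [c [L H]] hr hAB; exists c; split; auto. intros x hx.
  destruct (H x (hAB x hx)) as [c0 [h1 h2]]; exists c0; split; auto; lra. Qed.

Lemma inv2S k : / 2 ^ (S k) = / 2 ^ k / 2.
Proof. simpl. pose proof (pow_lt 2 k). field. lra. Qed.

Lemma inv2pos k : 0 < / 2 ^ k.
Proof. apply Rinv_0_lt_compat, pow_lt; lra. Qed.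

Definition annk (k : nat) (d : R) : Prop :=
  (/ 2 ^ (S k) <= d <= / 2 ^ k) \/ (- / 2 ^ k <= d <= - / 2 ^ (S k)).

Lemma Wa_intro (l : R -> Prop) z x k : l x -> annk k (x - z) -> Wa l z k.
Proof. intros hx ha. unfold Wa, W, shift. exists (x - z). split.
  - replace (x - z + z) with x by ring; auto.
  - exact ha. Qed.

Lemma disc_log n : forall a d, / 2 ^ (a + n + 1) < d <= / 2 ^ (S a) ->
  exists k, (a + 1 <= k <= a + n)%nat /\ / 2 ^ (S k) <= d <= / 2 ^ k.
Proof. induction n; intros a d [h1 h2].
  - exfalso. replace (a + 0 + 1)%nat with (S a) in h1 by lia. lra.
  - destruct (Rle_or_lt (/ 2 ^ (S (S a))) d) as [h|h].
    + exists (S a); split; [lia|split; auto].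
    + destruct (IHn (S a) d) as [k [hk hk']].
      * split; auto. replace (S a + n + 1)%nat with (a + S n + 1)%nat by lia; auto. lra.
      * exists k; split; auto; lia. Qed.

Fixpoint gs (lam : R) (j : nat) : R := match j with O => 0 | S j => gs lam j + lam ^ j end.

Lemma gs_eq lam j : (lam - 1) * gs lam j = lam ^ j - 1.
Proof. induction j; simpl; [ring|]. rewrite Rmult_plus_distr_l, IHj. ring. Qed.

Lemma pow_ge1 x n : 1 <= x -> 1 <= x ^ n.
Proof. intros h; induction n; simpl; [lra|]. nra. Qed.
Lemma cnt_pos (P : nat -> Prop) a n k : P k -> (a < k <= a + n)%nat -> (1 <= cnt P a n)%nat.
Proof. intros hP hk. replace n with ((S (k - a - 1)) + (a + n - k))%nat by lia.
  rewrite cnt_split. pose proof (cnt_last P a (k - a - 1)).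
  replace (a + S (k - a - 1))%nat with k in H by lia. specialize (H hP). lia. Qed.

Lemma cnt_budget (P : nat -> Prop) a n j T : P (a + n - j)%nat -> (j < n)%nat ->
  (cnt P a n <= S T)%nat -> (cnt P (a + n - j) j <= T)%nat.
Proof. intros hP hj hc. replace n with ((S (n - j - 1)) + j)%nat in hc by lia.
  rewrite cnt_split in hc. pose proof (cnt_last P a (n - j - 1)).
  replace (a + S (n - j - 1))%nat with (a + n - j)%nat in H by lia. specialize (H hP).
  replace (a + S (n - j - 1))%nat with (a + n - j)%nat in hc by lia. lia. Qed.

Lemma dich x z a n : Rabs (z - x) <= / 2 ^ (S a) ->
  Rabs (z - x) <= / 2 ^ (a + n + 1) \/ exists k, (a + 1 <= k <= a + n)%nat /\ annk k (z - x).
Proof. intros h. destruct (Rle_or_lt (Rabs (z - x)) (/ 2 ^ (a + n + 1))) as [h1|h1]; [left; auto|right].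
  destruct (disc_log n a (Rabs (z - x))) as [k [hk hk']]; [lra|].
  exists k; split; auto. unfold annk. destruct (Rle_or_lt 0 (z - x)).
  - rewrite Rabs_right in hk' by lra. left; lra.
  - rewrite Rabs_left in hk' by lra. right; lra. Qed.

Lemma center_cov (E : R -> Prop) x a n : (forall z, E z -> Rabs (z - x) <= / 2 ^ (a + n + 1)) ->
  covered_by E (/ 2 ^ (a + n)) 1.
Proof. intros H. exists (x - / 2 ^ (a + n + 1) :: nil); split; auto.
  intros z hz. exists (x - / 2 ^ (a + n + 1)); split; [left; auto|].
  specialize (H z hz). replace (a + n + 1)%nat with (S (a + n)) in * by lia.
  rewrite inv2S in *. apply Rabs_le_inv in H. lra. Qed.

Lemma cover_main (l : R -> Prop) lam mu (Hl : 1 < lam) (Hm : 1 < mu)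
  (Hlm : (mu - 1) * (lam - 1) = 2) :
  forall T n a x (E : R -> Prop), l x ->
  (forall z, E z -> l z /\ Rabs (z - x) <= / 2 ^ (S a)) ->
  (forall z, E z -> (cnt (Wa l z) a n <= T)%nat) ->
  exists m, covered_by E (/ 2 ^ (a + n)) m /\ INR m <= lam ^ n * mu ^ T.
Proof.
  induction T as [|T IH]; intros n a x E hx hE hB.
  - exists 1%nat; split.
    + apply (center_cov _ x). intros z hz. destruct (hE z hz) as [hlz hzx].
      destruct (dich x z a n hzx) as [h|[k [hk ha]]]; auto. exfalso.
      assert (Wa l z k) as hw.
      { apply (Wa_intro l z x k hx). unfold annk in *.
        destruct ha; [right|left]; lra. }
      pose proof (cnt_pos _ a n k hw ltac:(lia)). specialize (hB z hz). lia.
    + simpl. rewrite Rmult_1_r. pose proof (pow_ge1 lam n). lra.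
  -
    assert (HP : forall j, (j <= n)%nat -> exists m,
      covered_by (fun z => E z /\ exists k, (a + n < k + j)%nat /\ (k <= a + n)%nat /\ annk k (z - x))
        (/ 2 ^ (a + n)) m /\ INR m <= 2 * mu ^ T * gs lam j).
    { induction j as [|j IHj]; intros hj.
      - exists 0%nat; split.
        + apply cov_empty. intros z [_ [k [h1 [h2 _]]]]. lia.
        + simpl. lra.
      - destruct (IHj ltac:(lia)) as [m0 [hc0 hm0]].
        set (k0 := (a + n - j)%nat).
        assert (Hpiece : forall (sgn : bool), exists m,
          covered_by (fun z => E z /\ (if sgn then / 2 ^ (S k0) <= z - x <= / 2 ^ k0
                                         else - / 2 ^ k0 <= z - x <= - / 2 ^ (S k0)))
            (/ 2 ^ (a + n)) m /\ INR m <= lam ^ j * mu ^ T).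
        { intros sgn.
          set (Pc := fun z => E z /\ (if sgn then / 2 ^ (S k0) <= z - x <= / 2 ^ k0
                                         else - / 2 ^ k0 <= z - x <= - / 2 ^ (S k0))).
          destruct (classic (exists y, Pc y)) as [[y hy]|hne].
          - destruct (IH j k0 y Pc) as [m [hc hm]].
            + apply (hE y (proj1 hy)).
            + intros z hz. split; [apply (hE z (proj1 hz))|].
              pose proof (inv2S k0). pose proof (inv2pos k0).
              destruct hy as [_ hy]; destruct hz as [_ hz]. apply Rabs_le.
              destruct sgn; lra.
            + intros z hz. apply (cnt_budget _ a n j T); [| lia |].
              * apply (Wa_intro l z x); auto. destruct hz as [_ hz]. unfold annk.
                destruct sgn; [right|left]; unfold k0 in *; lra.
              * apply hB, (proj1 hz).
            + exists m; split; auto.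
              replace (a + n)%nat with (k0 + j)%nat by (unfold k0; lia). exact hc.
          - exists 0%nat; split.
            + apply cov_empty. intros z hz; apply hne; exists z; exact hz.
            + simpl. pose proof (pow_ge1 lam j). pose proof (pow_ge1 mu T). nra. }
        destruct (Hpiece true) as [m1 [hc1 hm1]].
        destruct (Hpiece false) as [m2 [hc2 hm2]].
        exists (m0 + (m1 + m2))%nat; split.
        + eapply cov_union; [exact hc0| eapply cov_union; [exact hc1|exact hc2| intros z hz; exact hz]|].
          intros z [hz [k [h1 [h2 h3]]]].
          destruct (Nat.eq_dec k k0) as [e|ne].
          * right. subst k. unfold annk in h3. destruct h3; [left|right]; split; auto.
          * left. split; auto. exists k; split; [unfold k0 in ne; lia|]; auto.
        + rewrite !plus_INR. simpl gs. lra. }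
    destruct (HP n (le_n n)) as [m [hc hm]].
    exists (1 + m)%nat; split.
    + eapply cov_union; [apply (center_cov (fun z => E z /\ Rabs (z - x) <= / 2 ^ (a + n + 1)) x a n)|exact hc|].
      * intros z [_ h]; exact h.
      * intros z hz. destruct (hE z hz) as [_ hzx].
        destruct (dich x z a n hzx) as [h|[k [hk ha]]]; [left; auto|right].
        split; auto. exists k; repeat split; auto; lia.
    + rewrite plus_INR. simpl INR.
      pose proof (gs_eq lam n). pose proof (pow_ge1 lam n). pose proof (pow_ge1 mu T).
      assert (2 * gs lam n = (mu - 1) * (lam ^ n - 1)).
      { apply Rmult_eq_reg_l with (lam - 1); [|lra]. rewrite <- Hlm at 1. nra. }
      simpl pow. nra.
Qed.
Lemma nat_floor t : 0 <= t -> exists i, INR i <= t < INR i + 1.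
Proof. intros ht. destruct (INR_archimed 1 t) as [N hN]; [lra|]. rewrite Rmult_1_r in hN.
  revert t ht hN. induction N; intros t ht hN.
  - simpl in hN; lra.
  - rewrite S_INR in hN. destruct (Rlt_or_le t (INR N)) as [h|h].
    + apply IHN; auto.
    + exists N; lra. Qed.

Lemma INR_le_pow2 n : INR n <= 2 ^ n.
Proof. induction n; [simpl; lra|]. rewrite S_INR. simpl. pose proof (pow_ge1 2 n). lra. Qed.

Lemma pow_floor X : 1 <= X -> exists b, 2 ^ b <= X < 2 ^ (S b).
Proof. intros hX. destruct (INR_archimed 1 X) as [N hN]; [lra|]. rewrite Rmult_1_r in hN.
  pose proof (INR_le_pow2 N). assert (X < 2 ^ N) by lra. clear hN H.
  induction N.
  - simpl in *; lra.
  - destruct (Rlt_or_le X (2 ^ N)) as [h|h].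
    + apply IHN; auto.
    + exists N; auto. Qed.

Lemma cover_global (l : R -> Prop) lam mu (Hl : 1 < lam) (Hm : 1 < mu)
  (Hlm : (mu - 1) * (lam - 1) = 2) lo hi (hb : forall z, l z -> lo <= z <= hi)
  K (hK : hi - lo < INR K / 2) :
  forall T n (E : R -> Prop), (forall z, E z -> l z) ->
  (forall z, E z -> (cnt (Wa l z) 0 n <= T)%nat) ->
  exists m, covered_by E (/ 2 ^ n) m /\ INR m <= INR K * (lam ^ n * mu ^ T).
Proof.
  intros T n E hEl hB.
  assert (HP : forall j, exists m,
    covered_by (fun z => E z /\ exists i, (i < j)%nat /\ lo + INR i / 2 <= z <= lo + (INR i + 1) / 2)
      (/ 2 ^ n) m /\ INR m <= INR j * (lam ^ n * mu ^ T)).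
  { induction j as [|j IHj].
    - exists 0%nat; split; [apply cov_empty; intros z [_ [i [hi' _]]]; lia | simpl; lra].
    - destruct IHj as [m0 [hc0 hm0]].
      set (Pc := fun z => E z /\ lo + INR j / 2 <= z <= lo + (INR j + 1) / 2).
      assert (exists m, covered_by Pc (/ 2 ^ n) m /\ INR m <= lam ^ n * mu ^ T) as [m1 [hc1 hm1]].
      { destruct (classic (exists y, Pc y)) as [[y hy]|hne].
        - destruct (cover_main l lam mu Hl Hm Hlm T n 0 y Pc) as [m [hc hm]].
          + apply hEl, (proj1 hy).
          + intros z hz. split; [apply hEl, (proj1 hz)|]. simpl.
            destruct hy as [_ hy]; destruct hz as [_ hz]. unfold Rabs; destruct Rcase_abs; lra.
          + intros z hz; apply hB, (proj1 hz).
          + exists m; split; auto.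
        - exists 0%nat; split.
          + apply cov_empty; intros z hz; apply hne; exists z; auto.
          + simpl. pose proof (pow_ge1 lam n). pose proof (pow_ge1 mu T). nra. }
      exists (m0 + m1)%nat; split.
      + eapply cov_union; [exact hc0|exact hc1|].
        intros z [hz [i [hi' hi'']]]. destruct (Nat.eq_dec i j) as [e|ne].
        * right. subst i. split; auto.
        * left. split; auto. exists i; split; auto; lia.
      + rewrite plus_INR. pose proof (S_INR j). nra. }
  destruct (HP K) as [m [hc hm]]. exists m; split; auto.
  eapply cov_mono; [exact hc| lra |]. intros z hz. split; auto.
  destruct (hb z (hEl z hz)) as [h1 h2].
  destruct (nat_floor (2 * (z - lo))) as [i [hi1 hi2]]; [lra|].
  exists i; split; [|lra].
  apply INR_lt. lra.
Qed.
Lemma ln_le' a b : 0 < a -> a <= b -> ln a <= ln b.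
Proof. intros ha hab. destruct (Req_dec a b) as [e|e]; [subst; lra|].
  left; apply ln_increasing; lra. Qed.

Lemma exp_le' a b : a <= b -> exp a <= exp b.
Proof. intros h. destruct (Req_dec a b) as [e|e]; [subst; lra|]. left; apply exp_increasing; lra. Qed.

Lemma exp_pow_nat x n : exp x ^ n = exp (INR n * x).
Proof. induction n; simpl; [rewrite Rmult_0_l, exp_0; auto|].
  rewrite IHn, <- exp_plus. f_equal. destruct n; simpl; lra. Qed.

Lemma ln2pos : 0 < ln 2.
Proof. pose proof ln_lt_2; lra. Qed.

Definition lamf (s : R) := exp (s / 2 * ln 2).
Definition muf (s : R) := 1 + 2 / (lamf s - 1).
Definition deltaf (s : R) := (s / 2 * ln 2) / ln (muf s).

Lemma lamf_gt1 s : 0 < s -> 1 < lamf s.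
Proof. intros hs. unfold lamf. rewrite <- exp_0. apply exp_increasing.
  pose proof ln2pos. nra. Qed.

Lemma muf_gt1 s : 0 < s -> 1 < muf s.
Proof. intros hs. pose proof (lamf_gt1 s hs). unfold muf.
  assert (0 < 2 / (lamf s - 1)) by (apply Rdiv_lt_0_compat; lra). lra. Qed.

Lemma lammu s : 0 < s -> (muf s - 1) * (lamf s - 1) = 2.
Proof. intros hs. pose proof (lamf_gt1 s hs). unfold muf. field. lra. Qed.

Lemma lnmu_pos s : 0 < s -> 0 < ln (muf s).
Proof. intros hs. rewrite <- ln_1. apply ln_increasing; [lra|]. apply muf_gt1; auto. Qed.

Lemma deltaf_pos s : 0 < s -> 0 < deltaf s.
Proof. intros hs. unfold deltaf. pose proof (lnmu_pos s hs). pose proof ln2pos.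
  apply Rdiv_lt_0_compat; nra. Qed.

Lemma est1 s n T Nd : 0 < s -> INR T <= INR Nd + deltaf s * INR n ->
  lamf s ^ n * muf s ^ T <= exp (INR Nd * ln (muf s)) * exp (INR n * s * ln 2).
Proof. intros hs hT. pose proof (lnmu_pos s hs). pose proof (muf_gt1 s hs).
  unfold lamf. rewrite exp_pow_nat. rewrite <- (exp_ln (muf s)) at 1 by lra.
  rewrite exp_pow_nat. rewrite <- !exp_plus. apply exp_le'.
  assert (INR T * ln (muf s) <= (INR Nd + deltaf s * INR n) * ln (muf s)) by (apply Rmult_le_compat_r; lra).
  unfold deltaf in H1. field_simplify in H1; [|lra]. lra. Qed.

Lemma est2 s n X : 0 <= s -> 2 ^ n <= X -> exp (INR n * s * ln 2) <= Rpower X s.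
Proof. intros hs hX. unfold Rpower. apply exp_le'. pose proof (pow_lt 2 n).
  assert (ln (2 ^ n) <= ln X) by (apply ln_le'; lra). rewrite ln_pow in H0 by lra.
  nra. Qed.

Lemma budget (cn : R -> nat) (E : R -> Prop) n Nd d : 0 <= d ->
  (forall z, E z -> (Nd <= n)%nat -> INR (cn z) <= d * INR n) ->
  (forall z, (cn z <= n)%nat) ->
  exists T, (forall z, E z -> (cn z <= T)%nat) /\ INR T <= INR Nd + d * INR n.
Proof. intros hd H Hn. destruct (nat_floor (INR Nd + d * INR n)) as [i [h1 h2]].
  { pose proof (pos_INR Nd); pose proof (pos_INR n); nra. }
  exists i; split; auto. intros z hz.
  assert (INR (cn z) < INR i + 1).
  { destruct (Compare_dec.le_lt_dec Nd n) as [h|h].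
    - specialize (H z hz h). pose proof (pos_INR Nd). lra.
    - pose proof (le_INR _ _ (Hn z)). apply lt_INR in h. pose proof (pos_INR n). nra. }
  rewrite <- S_INR in H0. apply INR_lt in H0. lia. Qed.

Lemma depth a r : 0 < r -> r * 2 ^ a < 1 -> exists n, / 2 ^ (a + n) <= r /\ 2 ^ n * (r * 2 ^ a) <= 2.
Proof. intros hr h. pose proof (pow_lt 2 a ltac:(lra)).
  assert (0 < r * 2 ^ a) by nra.
  destruct (pow_floor (/ (r * 2 ^ a))) as [b [h1 h2]].
  { rewrite <- Rinv_1. apply Rinv_le_contravar; lra. }
  exists (S b). rewrite pow_add. pose proof (pow_lt 2 b ltac:(lra)). split.
  - apply Rmult_lt_compat_r with (r := r * 2 ^ a) in h2; auto. rewrite Rinv_l in h2 by lra.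
    assert (1 <= 2 ^ a * 2 ^ S b * r) by (simpl in *; nra).
    assert (0 < 2 ^ a * 2 ^ S b) by (simpl; nra).
    apply Rmult_le_reg_l with (2 ^ a * 2 ^ S b); auto. rewrite Rinv_r by lra. lra.
  - apply Rmult_le_compat_r with (r := r * 2 ^ a) in h1; [|lra]. rewrite Rinv_l in h1 by lra.
    simpl. nra. Qed.
Lemma le_div a b r : 0 < r -> a * r <= b -> a <= b / r.
Proof. intros hr h. unfold Rdiv. apply Rmult_le_reg_r with r; auto.
  rewrite Rmult_assoc, Rinv_l, Rmult_1_r; lra. Qed.

Lemma covnum_le E r n m : is_covnum E r n -> covered_by E r m -> (n <= m)%nat.
Proof. intros [_ h] hc; apply h; auto. Qed.

Lemma part2 l : compact l -> uniformly_super_sparse l -> assouad_dim_eq l 0.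
Proof.
  intros hc hs. destruct (compact_P1 l hc) as [lo [hi hb]].
  split; [intros s [h _]; lra|].
  intros eps heps. set (s := eps / 2). assert (hs0 : 0 < s) by (unfold s; lra).
  exists s. split; [|unfold s; lra]. split; [lra|].
  pose proof (lamf_gt1 s hs0) as Hl. pose proof (muf_gt1 s hs0) as Hm. pose proof (lammu s hs0) as Hlm.
  destruct (hs (deltaf s) (deltaf_pos s hs0)) as [Nd hNd].
  destruct (INR_archimed 1 (2 * (hi - lo))) as [K hK]; [lra|]. rewrite Rmult_1_r in hK.
  assert (hK' : hi - lo < INR K / 2) by lra.
  set (E1 := exp (INR Nd * ln (muf s))).
  assert (hE1 : 0 < E1) by apply exp_pos.
  pose proof (pos_INR K) as hKp.
  assert (hR8 : 0 < Rpower 8 s) by (unfold Rpower; apply exp_pos).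
  exists ((INR K + 1) * E1 * Rpower 8 s). split; [apply Rmult_lt_0_compat; [nra|auto]|].
  intros x r R0 hx hr hrR n0 hcov.
  set (E := fun y => Rabs (y - x) <= R0 /\ l y).
  assert (claim : exists m n, covered_by E r m /\
     INR m <= (INR K + 1) * E1 * exp (INR n * s * ln 2) /\ 2 ^ n <= 8 * R0 / r).
  { destruct (Rle_or_lt R0 (/ 2)) as [hR|hR].
    - destruct (pow_floor (/ (2 * R0))) as [a [ha1 ha2]].
      { rewrite <- Rinv_1. apply Rinv_le_contravar; lra. }
      pose proof (pow_lt 2 a ltac:(lra)) as hpa.
      assert (hRa : R0 * (2 * 2 ^ a) <= 1).
      { apply Rmult_le_compat_r with (r := 2 * R0) in ha1; [|lra]. rewrite Rinv_l in ha1 by lra. nra. }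
      assert (hRa2 : 1 < 4 * R0 * 2 ^ a).
      { apply Rmult_lt_compat_r with (r := 2 * R0) in ha2; [|lra]. rewrite Rinv_l in ha2 by lra.
        simpl in ha2. nra. }
      destruct (depth a r hr ltac:(nra)) as [n [hn1 hn2]].
      destruct (budget (fun z => cnt (Wa l z) a n) E n Nd (deltaf s)) as [T [hT1 hT2]].
      { pose proof (deltaf_pos s hs0); lra. }
      { intros z [_ hz] hn. apply hNd; auto. }
      { intros z; apply cnt_le_N. }
      destruct (cover_main l (lamf s) (muf s) Hl Hm Hlm T n a x E hx) as [m [hcm hm]].
      { intros z [h1 h2]. split; auto. assert (/ 2 ^ S a = / (2 * 2 ^ a)) by auto.
        rewrite H. apply Rle_trans with R0; auto. apply le_div in hRa; [|nra].
        unfold Rdiv in hRa. rewrite Rmult_1_l in hRa. auto. }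
      { auto. }
      exists m, n; split; [eapply cov_mono; [exact hcm|exact hn1|auto]|split].
      + pose proof (est1 s n T Nd hs0 hT2). fold E1 in H.
        pose proof (exp_pos (INR n * s * ln 2)).
        assert (E1 * exp (INR n * s * ln 2) <= (INR K + 1) * E1 * exp (INR n * s * ln 2)).
        { pose proof (Rmult_lt_0_compat _ _ hE1 H0).
          replace ((INR K + 1) * E1 * exp (INR n * s * ln 2)) with ((INR K + 1) * (E1 * exp (INR n * s * ln 2))) by ring.
          nra. }
        lra.
      + apply le_div; auto. pose proof (pow_lt 2 n ltac:(lra)).
        assert (2 ^ n * r * 2 ^ a <= 8 * R0 * 2 ^ a) by lra.
        apply Rmult_le_reg_r with (2 ^ a); auto.
    - assert (exists n, / 2 ^ n <= r /\ 2 ^ n <= 8 * R0 / r) as [n [hn1 hn2]].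
      { destruct (Rle_or_lt 1 r) as [h1|h1].
        - exists 0%nat; simpl. split; [lra|]. apply le_div; lra.
        - destruct (depth 0 r hr ltac:(simpl; lra)) as [n [hn1 hn2]].
          exists n; split; auto. apply le_div; auto. simpl in hn2. lra. }
      destruct (budget (fun z => cnt (Wa l z) 0 n) E n Nd (deltaf s)) as [T [hT1 hT2]].
      { pose proof (deltaf_pos s hs0); lra. }
      { intros z [_ hz] hn. apply hNd; auto. }
      { intros z; apply cnt_le_N. }
      destruct (cover_global l (lamf s) (muf s) Hl Hm Hlm lo hi hb K hK' T n E) as [m [hcm hm]].
      { intros z [_ h]; auto. }
      { auto. }
      exists m, n; split; [eapply cov_mono; [exact hcm|exact hn1|auto]|split; auto].
      pose proof (est1 s n T Nd hs0 hT2). fold E1 in H.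
      pose proof (exp_pos (INR n * s * ln 2)).
      assert (0 <= lamf s ^ n * muf s ^ T) by (pose proof (pow_lt (lamf s) n); pose proof (pow_lt (muf s) T); nra).
      nra. }
  destruct claim as [m [n [hcm [hm h2n]]]].
  pose proof (covnum_le _ _ _ _ hcov hcm) as hle. apply le_INR in hle.
  pose proof (est2 s n (8 * R0 / r) ltac:(lra) h2n).
  replace (8 * R0 / r) with (8 * (R0 / r)) in H by (field; lra).
  rewrite <- Rpower_mult_distr in H by (try lra; apply Rdiv_lt_0_compat; lra).
  assert (0 < (INR K + 1) * E1) by nra.
  apply Rle_trans with (INR m); auto. apply Rle_trans with (1 := hm).
  replace ((INR K + 1) * E1 * Rpower 8 s * Rpower (R0 / r) s) with
    ((INR K + 1) * E1 * (Rpower 8 s * Rpower (R0 / r) s)) by ring.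
  apply Rmult_le_compat_l; lra.
Qed.
Lemma div_le a b q : 0 < q -> a <= b * q -> a / q <= b.
Proof. intros hq h. unfold Rdiv. apply Rmult_le_reg_r with q; auto.
  rewrite Rmult_assoc, Rinv_l, Rmult_1_r; lra. Qed.

Lemma ln_0 : ln 0 = 0.
Proof. unfold ln. destruct (Rlt_dec 0 0) as [h|h]; [exfalso; exact (Rlt_irrefl 0 h)|reflexivity]. Qed.

Lemma ln_INR_ge0 n : 0 <= ln (INR n).
Proof. destruct n. simpl; rewrite ln_0; lra.
  rewrite <- ln_1. apply ln_le'; [lra|]. rewrite S_INR. pose proof (pos_INR n); lra. Qed.

Lemma ratio_nonneg n r : 0 < r < 1 -> 0 <= ln (INR n) / (- ln r).
Proof. intros hr. assert (ln r < 0) by (rewrite <- ln_1; apply ln_increasing; lra).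
  apply Rle_mult_inv_pos; [apply ln_INR_ge0| lra]. Qed.

Lemma nat_least (P : nat -> Prop) m : P m -> exists n, P n /\ forall k, P k -> (n <= k)%nat.
Proof. revert m. induction m as [m IH] using (well_founded_induction Wf_nat.lt_wf). intros hm.
  destruct (classic (exists k, (k < m)%nat /\ P k)) as [[k [hk hk']]|hn].
  - exact (IH k hk hk').
  - exists m; split; auto. intros k hk. destruct (Compare_dec.le_lt_dec m k); auto.
    exfalso; apply hn; exists k; auto. Qed.

Lemma covnum_exists E r m : covered_by E r m -> exists n, is_covnum E r n.
Proof. intros h. destruct (nat_least (fun n => covered_by E r n) m h) as [n [h1 h2]].
  exists n; split; auto. Qed.

Lemma cover_bounded (l : R -> Prop) lo hi : (forall z, l z -> lo <= z <= hi) ->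
  forall r, 0 < r < 1 -> exists m, covered_by l r m.
Proof. intros hb r hr. pose proof (lamf_gt1 1 Rlt_0_1) as Hl. pose proof (muf_gt1 1 Rlt_0_1) as Hm.
  pose proof (lammu 1 Rlt_0_1) as Hlm.
  destruct (INR_archimed 1 (2 * (hi - lo))) as [K hK]; [lra|]. rewrite Rmult_1_r in hK.
  destruct (depth 0 r ltac:(lra) ltac:(simpl; lra)) as [n [hn1 _]].
  destruct (cover_global l _ _ Hl Hm Hlm lo hi hb K ltac:(lra) n n l) as [m [hc _]]; auto.
  { intros z _; apply cnt_le_N. }
  exists m. eapply cov_mono; [exact hc|exact hn1|auto]. Qed.

Lemma box_lower (l : R -> Prop) lo hi : (forall z, l z -> lo <= z <= hi) ->
  forall eps, eps > 0 -> forall r0, r0 > 0 ->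
     exists r n, 0 < r < r0 /\ is_covnum l r n /\ ln (INR n) / (- ln r) >= 0 - eps.
Proof. intros hb eps heps r0 hr0. set (r := Rmin (r0 / 2) (/ 2)).
  assert (0 < r) by (apply Rmin_glb_lt; lra).
  assert (r <= r0 / 2) by apply Rmin_l. assert (r <= / 2) by apply Rmin_r.
  destruct (cover_bounded l lo hi hb r ltac:(lra)) as [m hm].
  destruct (covnum_exists _ _ _ hm) as [n hn].
  exists r, n. split; [lra|split; auto]. pose proof (ratio_nonneg n r ltac:(lra)). lra. Qed.

Lemma part1 l : compact l -> uniformly_sparse l -> upper_box_dim_eq l 0.
Proof.
  intros hc hs. destruct (compact_P1 l hc) as [lo [hi hb]].
  split; [|apply (box_lower l lo hi hb)].
  intros eps heps. set (s := eps / 2). assert (hs0 : 0 < s) by (unfold s; lra).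
  pose proof (lamf_gt1 s hs0) as Hl. pose proof (muf_gt1 s hs0) as Hm. pose proof (lammu s hs0) as Hlm.
  destruct (hs (deltaf s) (deltaf_pos s hs0)) as [Nd hNd].
  destruct (INR_archimed 1 (2 * (hi - lo))) as [K hK]; [lra|]. rewrite Rmult_1_r in hK.
  assert (hK' : hi - lo < INR K / 2) by lra.
  set (E1 := exp (INR Nd * ln (muf s))).
  assert (hE1 : 0 < E1) by apply exp_pos.
  pose proof (pos_INR K) as hKp.
  assert (hKE : 0 < (INR K + 1) * E1) by nra.
  set (c := ln ((INR K + 1) * E1) + s * ln 2).
  exists (Rmin (/ 2) (exp (- Rabs c / s))). split; [apply Rmin_glb_lt; [lra|apply exp_pos]|].
  intros r n0 [hr hr0] hcov.
  assert (hr1 : r < / 2) by (pose proof (Rmin_l (/ 2) (exp (- Rabs c / s))); lra).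
  assert (hr2 : r < exp (- Rabs c / s)) by (pose proof (Rmin_r (/ 2) (exp (- Rabs c / s))); lra).
  assert (hq0 : ln r < 0) by (rewrite <- ln_1; apply ln_increasing; lra).
  assert (hq1 : ln r < - Rabs c / s).
  { rewrite <- (ln_exp (- Rabs c / s)). apply ln_increasing; auto. }
  assert (hq2 : Rabs c < s * (- ln r)).
  { apply Rmult_lt_compat_l with (r := s) in hq1; auto. unfold Rdiv in hq1.
    replace (s * (- Rabs c * / s)) with (- Rabs c) in hq1 by (field; lra). lra. }
  destruct (depth 0 r hr ltac:(simpl; lra)) as [n [hn1 hn2]]. simpl in hn2.
  destruct (budget (fun z => cnt (Wa l z) 0 n) l n Nd (deltaf s)) as [T [hT1 hT2]].
  { pose proof (deltaf_pos s hs0); lra. }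
  { intros z hz hn. apply hNd; auto. }
  { intros z; apply cnt_le_N. }
  destruct (cover_global l (lamf s) (muf s) Hl Hm Hlm lo hi hb K hK' T n l) as [m [hcm hm]]; auto.
  assert (hcm' : covered_by l r m) by (eapply cov_mono; [exact hcm|exact hn1|auto]).
  pose proof (covnum_le _ _ _ _ hcov hcm') as hle. apply le_INR in hle.
  pose proof (est1 s n T Nd hs0 hT2) as he1. fold E1 in he1.
  assert (h2n : 2 ^ n <= 2 / r) by (apply le_div; lra).
  pose proof (est2 s n (2 / r) ltac:(lra) h2n) as he2.
  assert (0 <= lamf s ^ n * muf s ^ T) by (pose proof (pow_lt (lamf s) n); pose proof (pow_lt (muf s) T); nra).
  pose proof (exp_pos (INR n * s * ln 2)).
  assert (hbound : INR n0 <= (INR K + 1) * E1 * Rpower (2 / r) s).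
  { apply Rle_trans with (INR m); auto. apply Rle_trans with (1 := hm).
    apply Rle_trans with ((INR K + 1) * (E1 * exp (INR n * s * ln 2))).
    - pose proof (Rmult_lt_0_compat _ _ hE1 H0). nra.
    - rewrite <- Rmult_assoc. apply Rmult_le_compat_l; lra. }
  destruct n0 as [|n0'].
  - simpl. rewrite ln_0. unfold Rdiv. rewrite Rmult_0_l. lra.
  - assert (hpos : 0 < INR (S n0')) by (rewrite S_INR; pose proof (pos_INR n0'); lra).
    assert (hR : 0 < Rpower (2 / r) s) by (unfold Rpower; apply exp_pos).
    pose proof (ln_le' _ _ hpos hbound) as hl.
    rewrite ln_mult in hl by (auto; nra).
    unfold Rpower in hl. rewrite ln_exp in hl.
    unfold Rdiv in hl. rewrite (ln_mult 2 (/ r)) in hl by (try lra; apply Rinv_0_lt_compat; lra).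
    rewrite ln_Rinv in hl by lra.
    apply div_le; [lra|]. unfold c in hq2.
    pose proof (Rle_abs (ln ((INR K + 1) * E1) + s * ln 2)).
    assert (he : eps = 2 * s) by (unfold s; lra). rewrite he. lra.
Qed.
Lemma inv2_le k k' : (k <= k')%nat -> / 2 ^ k' <= / 2 ^ k.
Proof. intros h. apply Rinv_le_contravar; [apply pow_lt; lra|]. apply Rle_pow; lra || auto. Qed.

Lemma annk_two d k1 k2 : annk k1 d -> annk k2 d -> (k1 <= k2)%nat -> (k2 <= S k1)%nat.
Proof. intros h1 h2 hk. destruct (Compare_dec.le_lt_dec k2 (S k1)) as [h|h]; auto. exfalso.
  pose proof (inv2_le (S (S k1)) k2 ltac:(lia)). pose proof (inv2S (S k1)). pose proof (inv2pos (S k1)).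
  pose proof (inv2pos (S k2)). unfold annk in *. destruct h1; destruct h2; lra. Qed.

Lemma annk_choice d : exists j0, forall k, annk k d -> k = j0 \/ k = S j0.
Proof. destruct (classic (exists k, annk k d)) as [[k hk]|hn].
  - destruct (nat_least (fun k => annk k d) k hk) as [j0 [h1 h2]]. exists j0. intros k' hk'.
    pose proof (h2 k' hk'). pose proof (annk_two d j0 k' h1 hk' H). lia.
  - exists 0%nat. intros k hk; exfalso; apply hn; exists k; auto. Qed.

Lemma list_scales (L : list R) a : exists js : list nat, (length js <= 2 * length L)%nat /\
  forall k, (exists y, In y L /\ annk k (y - a)) -> In k js.
Proof. induction L as [|y L IH].
  - exists nil; split; [simpl; lia|]. intros k [y [[] _]].
  - destruct IH as [js [h1 h2]]. destruct (annk_choice (y - a)) as [j0 hj0].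
    exists (j0 :: S j0 :: js); split; [simpl in *; lia|].
    intros k [y' [[e|hy] ha]].
    + subst y'. destruct (hj0 k ha) as [e|e]; subst; simpl; auto.
    + simpl; right; right; apply h2; exists y'; auto. Qed.

Lemma part3 l : finite_set l -> uniformly_super_sparse l.
Proof. intros [L hL] delta hd.
  destruct (INR_archimed delta (INR (2 * length L))) as [Nd hNd]; auto.
  exists Nd. intros a ha k N hN.
  destruct (list_scales L a) as [js [h1 h2]].
  assert (cnt (Wa l a) k N <= 2 * length L)%nat.
  { eapply Nat.le_trans; [apply (cnt_mono _ (fun j => In j js))|].
    - intros j [x [hx hax]]. apply h2. exists (x + a). split; [apply hL; auto|].
      replace (x + a - a) with x by ring. exact hax.
    - pose proof (cnt_list js k N). lia. }
  apply le_INR in H. apply le_INR in hN. nra. Qed.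

Lemma cnt_all (P : nat -> Prop) k N : (forall j, P j) -> cnt P k N = N.
Proof. intros H; induction N; simpl; auto. destruct excluded_middle_informative as [h|h]; [lia|].
  exfalso; auto. Qed.

Lemma l0_notsparse : ~ sparse_near l0 0.
Proof. intros H. destruct (H (1 / 2) ltac:(lra)) as [N0 hN].
  specialize (hN (S N0) ltac:(lia)). rewrite cnt_all in hN.
  - rewrite S_INR in hN. pose proof (pos_INR N0). lra.
  - intros j. exists (/ 2 ^ j). split.
    + right. exists j. ring.
    + left. pose proof (inv2S j). pose proof (inv2pos j). lra. Qed.

Lemma ln2_lt1 : ln 2 < 1.
Proof. rewrite <- (ln_exp 1). apply ln_increasing; [lra|]. pose proof (exp_ineq1 1). lra. Qed.

Lemma l0_cover n : covered_by l0 (/ 2 ^ n) (S n).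
Proof. exists (0 :: map (fun k => / 2 ^ k) (seq 0 n)). split.
  - simpl. rewrite length_map, length_seq; auto.
  - intros x [e|[k e]]; subst.
    + exists 0; split; [left; auto|]. pose proof (inv2pos n); lra.
    + destruct (Compare_dec.le_lt_dec n k) as [h|h].
      * exists 0; split; [left; auto|]. pose proof (inv2_le n k h). pose proof (inv2pos k). lra.
      * exists (/ 2 ^ k); split; [right; apply (in_map (fun k => / 2 ^ k)), in_seq; lia|]. pose proof (inv2pos n). lra. Qed.

Lemma l0_box : upper_box_dim_eq l0 0.
Proof.
  split.
  2:{ apply (box_lower l0 0 1). intros z [e|[k e]]; subst; [lra|]. pose proof (inv2pos k).
      pose proof (inv2_le 0 k ltac:(lia)). simpl in H0. lra. }
  intros eps heps. set (Q := 1 + 20 / (eps * eps)).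
  assert (hQ : 1 <= Q) by (unfold Q; assert (0 < 20 / (eps * eps)) by (apply Rdiv_lt_0_compat; nra); lra).
  exists (Rmin (/ 2) (exp (- Q))). split; [apply Rmin_glb_lt; [lra|apply exp_pos]|].
  intros r n0 [hr hr0] hcov.
  assert (hr1 : r < / 2) by (pose proof (Rmin_l (/ 2) (exp (- Q))); lra).
  assert (hr2 : r < exp (- Q)) by (pose proof (Rmin_r (/ 2) (exp (- Q))); lra).
  assert (hq1 : ln r < - Q) by (rewrite <- (ln_exp (- Q)); apply ln_increasing; auto).
  set (q := - ln r). assert (hq : Q < q) by (unfold q; lra).
  destruct (depth 0 r hr ltac:(simpl; lra)) as [n [hn1 hn2]]. simpl in hn2, hn1.
  pose proof (covnum_le _ _ _ _ hcov (cov_mono _ _ _ _ _ (l0_cover n) hn1 (fun z h => h))) as hle.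
  apply le_INR in hle. rewrite S_INR in hle.
  assert (hnq : INR n < 2 + 2 * q).
  { assert (h2n : 2 ^ n <= 2 / r) by (apply le_div; lra).
    pose proof (pow_lt 2 n ltac:(lra)).
    pose proof (ln_le' _ _ H h2n) as hl. rewrite ln_pow in hl by lra.
    unfold Rdiv in hl. rewrite ln_mult in hl by (try lra; apply Rinv_0_lt_compat; lra).
    rewrite ln_Rinv in hl by lra. fold q in hl. pose proof ln_lt_2. pose proof ln2_lt1.
    pose proof (pos_INR n). nra. }
  destruct n0 as [|n0'].
  - simpl. rewrite ln_0. unfold Rdiv. rewrite Rmult_0_l. lra.
  - assert (hpos : 0 < INR (S n0')) by (rewrite S_INR; pose proof (pos_INR n0'); lra).
    assert (hexp : 3 + 2 * q <= exp (eps * q)).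
    { replace (eps * q) with (eps * q / 2 + eps * q / 2) by field. rewrite exp_plus.
      assert (0 < eps * q / 2) by (apply Rdiv_lt_0_compat; [nra|lra]).
      pose proof (exp_ineq1 (eps * q / 2) ltac:(lra)).
      assert (hQe : 20 < eps * eps * q).
      { unfold Q in hq. assert (0 < eps * eps) by nra.
        assert (20 / (eps * eps) * (eps * eps) = 20) by (field; lra). nra. }
      nra. }
    assert (INR (S n0') <= exp (eps * q)) by lra.
    pose proof (ln_le' _ _ hpos H) as hl. rewrite ln_exp in hl.
    apply div_le; [unfold q; lra|]. fold q. lra.
Qed.

Lemma part4 : upper_box_dim_eq l0 0 /\ ~ sparse_near l0 0 /\ ~ uniformly_sparse l0.
Proof. split; [apply l0_box|split; [apply l0_notsparse|]].
  intros hu. apply l0_notsparse. intros d hd. destruct (hu d hd) as [Nd hNd].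
  exists Nd. intros n hn. apply hNd; auto. left; auto. Qed.

Theorem proposition4p2 :
  (forall l : R -> Prop, compact l -> uniformly_sparse l -> upper_box_dim_eq l 0) /\
  (forall l : R -> Prop, compact l -> uniformly_super_sparse l -> assouad_dim_eq l 0) /\
  (forall l : R -> Prop, compact l -> finite_set l -> uniformly_super_sparse l) /\
  (upper_box_dim_eq l0 0 /\ ~ sparse_near l0 0 /\ ~ uniformly_sparse l0).
Proof.
  split; [exact part1|]. split; [exact part2|]. split; [intros l _; exact (part3 l)|]. exact part4.
Qed.
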